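(* Let $N\in\mathbb{N}$ and $a\in\mathbb{N}$. Then there exist $p,c,d\in\mathbb{N}$ such that $\gcd(a,p)=\gcd(a,c)=\gcd(c,d)=1$, $pc\equiv pd\equiv 1\pmod a$, $p>N$, $pc>aN$, and $d>\max\{(a-1)pc+a(N-1),\ ac\}$. *)

(* Defs.v *)
From mathcomp Require Import all_boot.

(* Main.v *)
Require Import Defs.
From mathcomp Require Import all_boot.
From mathcomp Require Import zify ring.

Theorem lemma4p1 (N a : nat) (ha : 0 < a) :
  exists p c d : nat,
    [/\ gcdn a p = 1, gcdn a c = 1 & gcdn c d = 1] /\
    [/\ p * c = 1 %[mod a], p * d = 1 %[mod a],
        N < p, a * N < p * c &
        maxn ((a - 1) * p * c + a * (N - 1)) (a * c) < d].
Proof.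
set p := N * a + 1.
set K := p * (p * p + N) * a.
exists p, p, (K * p + 1).
have gp : gcdn a p = 1 by rewrite /p gcdnMDl gcdn1.
split; first by split => //; rewrite gcdnMDl gcdn1.
have E1 : p * p = (N * N * a + 2 * N) * a + 1 by rewrite /p; ring.
have E2 : p * (K * p + 1) = (p * (p * (p * (p * p + N))) + N) * a + 1.
  by rewrite /K /p; ring.
have Hp1 : 0 < p by rewrite /p addn1.
have HpN : N < p by rewrite /p addn1 ltnS leq_pmulr.
have HK : a * (p * p + N) <= K * p.
  rewrite /K; apply: (leq_trans _ (leq_pmulr _ Hp1)).
  rewrite mulnC -mulnA; exact: leq_pmull.
clearbody K p.
split.
- by rewrite E1 modnMDl.
- by rewrite E2 modnMDl.
- done.
- have : p <= p * p by apply: leq_pmull.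
  rewrite E1; lia.
- rewrite gtn_max; apply/andP; split.
  + have H1 : (a - 1) * p * p <= a * (p * p).
      by rewrite -mulnA leq_mul2r leq_subr orbT.
    have H2 : a * (N - 1) <= a * N by rewrite leq_mul2l leq_subr orbT.
    rewrite mulnDr in HK; lia.
  + have H3 : p <= p * p by apply: leq_pmull.
    have : a * p <= a * (p * p + N).
      by rewrite leq_mul2l (leq_trans H3 (leq_addr _ _)) orbT.
    lia.
Qed.
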